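(* Let $\mathbb{K}$ be a field and $f_1,\dots,f_t\in\mathbb{K}[x,y]$ ($t\ge2$) polynomials of $y$-degree at most $d_y\ge1$, such that the coefficient of $y^{d_y}$ in $f_t$ equals $1$. Let $I=\langle f_1,\dots,f_t\rangle$. Then every $f\in I$ with $\deg_y(f)<2d_y$ can be written as $f=w_1f_1+\cdots+w_tf_t$ with all $w_i\in\mathbb{K}[x,y]$ of $y$-degree less than $d_y$. *)

(* Defs.v *)
(* Bivariate polynomials K[x,y] are represented as
   {poly {poly K}}: the outer variable is y, coefficients are polynomials in x.
   y-degree of p is (size p).-1; "deg_y p <= d" is "size p <= d.+1" and
   "deg_y p < d" is "size p <= d" (with the convention deg 0 = -oo). *)
From mathcomp Require Import all_boot all_order all_algebra.
Set Implicit Arguments. Unset Strict Implicit. Unset Printing Implicit Defensive.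
Import GRing.Theory.
Local Open Scope ring_scope.

Definition in_ideal (K : fieldType) (t : nat) (F : nat -> {poly {poly K}})
  (f : {poly {poly K}}) : Prop :=
  exists g : nat -> {poly {poly K}}, f = \sum_(1 <= i < t.+1) g i * F i.

(* Main.v *)
Set Warnings "-all".
Require Import Defs.
From mathcomp Require Import all_boot all_order all_algebra.
From mathcomp Require Import zify.
Import GRing.Theory.
Local Open Scope ring_scope.

Theorem mainTheorem5 (K : fieldType) (t dy : nat) (ht : (2 <= t)%N) (hdy : (1 <= dy)%N)
  (F : nat -> {poly {poly K}})
  (hdeg : forall i, (1 <= i <= t)%N -> (size (F i) <= dy.+1)%N)
  (hmon : (F t)`_dy = 1)
  (f : {poly {poly K}}) (hf : in_ideal t F f) (hfdeg : (size f <= 2 * dy)%N) :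
  exists w : nat -> {poly {poly K}},
    (forall i, (1 <= i <= t)%N -> (size (w i) <= dy)%N) /\
    f = \sum_(1 <= i < t.+1) w i * F i.
Proof.
case: hf => g fE.
have t1 : (1 <= t)%N by apply: leq_trans ht.
have hsz : size (F t) = dy.+1.
  apply/eqP; rewrite eqn_leq hdeg ?t1 ?leqnn //=.
  rewrite ltnNge; apply/negP => hle.
  by move: hmon; rewrite nth_default // => /eqP; rewrite eq_sym oner_eq0.
have mon : F t \is monic.
  by apply/monicP; rewrite /lead_coef hsz.
have Ft0 : F t != 0 by rewrite -size_poly_gt0 hsz.
pose q i := Pdiv.CommonRing.rdivp (g i) (F t).
pose r i := Pdiv.CommonRing.rmodp (g i) (F t).
pose W := g t + \sum_(1 <= i < t) q i * F i.
pose w i := if i == t then W else r i.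
have sumE : f = W * F t + \sum_(1 <= i < t) r i * F i.
  rewrite fE big_nat_recr //= /W mulrDl addrC -addrA; congr (_ + _).
  rewrite mulr_suml -big_split /=; apply: eq_bigr => i _.
  rewrite /q /r {1}(Pdiv.RingMonic.rdivp_eq mon (g i)) mulrDl; congr (_ + _).
  by rewrite -!mulrA [F t * _]mulrC.
exists w; split.
  move=> i /andP [i1 it]; rewrite /w; case: eqP => [_|_]; last first.
    by rewrite -ltnS -hsz Pdiv.CommonRing.ltn_rmodpN0.
  have: W * F t = f - \sum_(1 <= i < t) r i * F i by rewrite sumE addrK.
  have [->|W0] := eqVneq W 0; first by rewrite size_poly0.
  move=> eqW; have szW := size_Mmonic W0 mon; rewrite hsz addnS /= in szW.
  have : (size (W * F t)%R <= 2 * dy)%N.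
    rewrite eqW; apply: leq_trans (size_polyD _ _) _.
    rewrite geq_max hfdeg size_polyN /= big_nat_cond.
    apply: (big_ind (fun p : {poly {poly K}} => (size p <= 2 * dy)%N)).
    - by rewrite size_poly0.
    - by move=> a b ha hb; apply: leq_trans (size_polyD _ _) _; rewrite geq_max ha hb.
    move=> j /andP [/andP [j1 jt] _]; apply: leq_trans (size_mul_leq _ _) _.
    have h1 : (size (r j) <= dy)%N by rewrite -ltnS -hsz Pdiv.CommonRing.ltn_rmodpN0.
    have h2 : (size (F j) <= dy.+1)%N by rewrite hdeg // j1 ltnW.
    move: h1 h2; case: (size (r j)) => [|a]; case: (size (F j)) => [|b] /=; lia.
  by rewrite szW mul2n -addnn leq_add2r.
rewrite sumE big_nat_recr //= /w eqxx addrC; congr (_ + _).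
apply: eq_big_nat => i /andP [_ it]; by rewrite ltn_eqF.
Qed.
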